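(* Let $\mathfrak{A}$ be a complete atomic weakly associative relation algebra and $\mathfrak{B}$ its suitable structure. If $\langle u_0,u_1,u_2\rangle\in V(\mathfrak{B})$, then $\langle u_{\pi(0)},u_{\pi(1)},u_{\pi(2)}\rangle\in V(\mathfrak{B})$ for every function $\pi:\{0,1,2\}\to\{0,1,2\}$ that is not a permutation.
   Context: WA: algebras $\langle A,+,\overline{\phantom{x}},;,\breve{\phantom{x}},1'\rangle$ with $x\cdot y=\overline{\overline{x}+\overline{y}}$, $0'=\overline{1'}$, $1=1'+0'$, $0=\overline{1}$, satisfying for all $x,y,z$: $x+y=y+x$; $x+(y+z)=(x+y)+z$; $\overline{\overline{x}+\overline{y}}+\overline{\overline{x}+y}=x$; $((x\cdot 1');1);1=(x\cdot1');1$; $(x+y);z=x;z+y;z$; $x;1'=x$; $\breve{\breve{x}}=x$; $\breve{(x+y)}=\breve{x}+\breve{y}$; $\breve{(x;y)}=\breve{y};\breve{x}$; $\breve{x};\overline{x;y}+\overline{y}=\overline{y}$. Suitable structure $\mathfrak{B}=\langle B,T_\kappa,E_{\kappa\lambda}\rangle_{\kappa,\lambda<3}$: $B=\{s\in{}^3\mathrm{At}(\mathfrak{A}): s_2;s_0\ge s_1\}$; $T_\kappa=\{\langle s,t\rangle\in B\times B:s_\kappa=t_\kappa\}$; $E_{\kappa\kappa}=B$; for distinct $\kappa,\lambda$ with third index $\mu$, $E_{\kappa\lambda}=\{s\in B:s_\mu\le1'\}$. Trails: a $\mathfrak{B}$-trail is $p=\langle t_0,\kappa_0,\dots,t_n,\kappa_n\rangle$,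 $n\in\omega$, $t_i\in B$, $\kappa_i<3$, with $t_i\ne t_{i+1}$ and $\langle t_i,t_{i+1}\rangle\in T_{\kappa_i}$ for $i<n$; it ends at $t_n$. $\mathrm{Tr}(\mathfrak{B})$ = set of trails; $p\lambda=\langle t_0,\kappa_0,\dots,t_n,\lambda\rangle$. $\approx$ is the smallest equivalence relation on $\mathrm{Tr}(\mathfrak{B})$ with (for trails of the displayed forms): (a) $\langle t_0,\kappa_0,\dots,t_i,\lambda,s,\lambda,t_i,\kappa_i,\dots,t_n,\kappa_n\rangle\approx\langle t_0,\kappa_0,\dots,t_i,\kappa_i,\dots,t_n,\kappa_n\rangle$; (b) $\langle t_0,\kappa_0,\dots,t_n,\lambda,s,\nu\rangle\approx\langle t_0,\kappa_0,\dots,t_n,\nu\rangle$ if $\lambda\ne\nu$; (c) $\langle t_0,\kappa_0,\dots,t_n,\lambda\rangle\approx\langle t_0,\kappa_0,\dots,t_n,\kappa_n\rangle$ if $t_n\in E_{\lambda\kappa_n}$. $p^{\mathfrak{B}}$ = $\approx$-class of $p$; $V(\mathfrak{B})=\{\langle(p0)^{\mathfrak{B}},(p1)^{\mathfrak{B}},(p2)^{\mathfrak{B}}\rangle:p\in\mathrm{Tr}(\mathfrak{B})\}$. *)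

(* Defs.v *)
From Stdlib Require Import List Relations.
Import ListNotations.
Set Implicit Arguments.

Record WA := mkWA {
  car :> Type;
  wplus : car -> car -> car;
  wcompl : car -> car;
  wcomp : car -> car -> car;
  wconv : car -> car;
  wone' : car;
  wmul := fun x y => wcompl (wplus (wcompl x) (wcompl y));
  wzero' := wcompl wone';
  wone := wplus wone' wzero';
  wzero := wcompl wone;
  ax_comm : forall x y, wplus x y = wplus y x;
  ax_assoc : forall x y z, wplus x (wplus y z) = wplus (wplus x y) z;
  ax_huntington : forall x y,
    wplus (wcompl (wplus (wcompl x) (wcompl y)))
          (wcompl (wplus (wcompl x) y)) = x;
  ax_wassoc : forall x,
    wcomp (wcomp (wmul x wone') wone) wone = wcomp (wmul x wone') wone;
  ax_distr : forall x y z, wcomp (wplus x y) z = wplus (wcomp x z) (wcomp y z);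
  ax_ident : forall x, wcomp x wone' = x;
  ax_convconv : forall x, wconv (wconv x) = x;
  ax_convplus : forall x y, wconv (wplus x y) = wplus (wconv x) (wconv y);
  ax_convcomp : forall x y, wconv (wcomp x y) = wcomp (wconv y) (wconv x);
  ax_tarski : forall x y,
    wplus (wcomp (wconv x) (wcompl (wcomp x y))) (wcompl y) = wcompl y
}.

Section WAdefs.
Variable A : WA.

Definition wle (x y : A) : Prop := wplus A x y = y.

Definition is_atom (a : A) : Prop :=
  a <> wzero A /\ forall x, wle x a -> x = wzero A \/ x = a.

Definition WA_atomic : Prop :=
  forall x : A, x <> wzero A -> exists a, is_atom a /\ wle a x.

Definition WA_complete : Prop :=
  forall S : A -> Prop, exists s : A,
    (forall x, S x -> wle x s) /\ (forall y, (forall x, S x -> wle x y) -> wle s y).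

Inductive i3 := i0 | i1 | i2.

Definition third (k l : i3) : i3 :=
  match k, l with
  | i0, i1 | i1, i0 => i2
  | i0, i2 | i2, i0 => i1
  | _, _ => i0
  end.

Definition sel (s : A * A * A) (k : i3) : A :=
  match s with (s0, s1, s2) =>
    match k with i0 => s0 | i1 => s1 | i2 => s2 end end.

Definition Bprop (s : A * A * A) : Prop :=
  is_atom (sel s i0) /\ is_atom (sel s i1) /\ is_atom (sel s i2) /\
  wle (sel s i1) (wcomp A (sel s i2) (sel s i0)).

Definition B := { s : A * A * A | Bprop s }.

Definition Bsel (t : B) (k : i3) : A := sel (proj1_sig t) k.

Definition T (k : i3) (s t : B) : Prop := Bsel s k = Bsel t k.

Definition E (k l : i3) (s : B) : Prop :=
  k = l \/ (k <> l /\ wle (Bsel s (third k l)) (wone' A)).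

Fixpoint trail_ok (l : list (B * i3)) : Prop :=
  match l with
  | [] => True
  | [_] => True
  | (t, k) :: (((t', _) :: _) as rest) => t <> t' /\ T k t t' /\ trail_ok rest
  end.

Definition Trail := { l : list (B * i3) | l <> [] /\ trail_ok l }.

Fixpoint setlast (l : list (B * i3)) (lam : i3) : list (B * i3) :=
  match l with
  | [] => []
  | [(t, _)] => [(t, lam)]
  | x :: rest => x :: setlast rest lam
  end.

Inductive gen_step : list (B * i3) -> list (B * i3) -> Prop :=
  | step_a : forall pre post ti lam s ki,
      gen_step (pre ++ [(ti, lam); (s, lam); (ti, ki)] ++ post)
               (pre ++ [(ti, ki)] ++ post)
  | step_b : forall pre tn lam s nu, lam <> nu ->
      gen_step (pre ++ [(tn, lam); (s, nu)]) (pre ++ [(tn, nu)])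
  | step_c : forall pre tn lam kn, E lam kn tn ->
      gen_step (pre ++ [(tn, lam)]) (pre ++ [(tn, kn)]).

Definition trail_equiv : relation Trail :=
  clos_refl_sym_trans Trail
    (fun p q => gen_step (proj1_sig p) (proj1_sig q)).

Definition cls (p : Trail) : Trail -> Prop := fun q => trail_equiv p q.

Definition V (u : i3 -> (Trail -> Prop)) : Prop :=
  exists p : Trail, forall k : i3, exists q : Trail,
    proj1_sig q = setlast (proj1_sig p) k /\ u k = cls q.

End WAdefs.

Definition is_permutation (f : i3 -> i3) : Prop :=
  exists g : i3 -> i3, (forall x, g (f x) = x) /\ (forall y, f (g y) = y).

(* Main.v *)
Require Import Defs.
From Stdlib Require Import List Relations Classical FunctionalExtensionality PropExtensionality.
Import ListNotations.
Lemma h3_3 (A : WA) (x0 x1 : A) : (wplus A x0 x1) = (wplus A x1 x0).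
Proof.
  pose proof (ax_comm A x0 x1) as H0.
  congruence.
Qed.
Lemma h3_4 (A : WA) (x0 x1 x2 : A) : (wplus A x0 (wplus A x1 x2)) = (wplus A (wplus A x0 x1) x2).
Proof.
  pose proof (ax_assoc A x0 x1 x2) as H0.
  congruence.
Qed.
Lemma h3_5 (A : WA) (x0 x1 x2 : A) : (wplus A x0 (wplus A x1 x2)) = (wplus A x2 (wplus A x0 x1)).
Proof.
  pose proof (h3_4 A x0 x1 x2) as H0.
  pose proof (h3_3 A (wplus A x0 x1) x2) as H1.
  congruence.
Qed.
Lemma h3_6 (A : WA) (x0 x1 x2 : A) : (wplus A x0 (wplus A x1 x2)) = (wplus A x1 (wplus A x0 x2)).
Proof.
  pose proof (h3_3 A x1 x0) as H0.
  pose proof (h3_4 A x1 x0 x2) as H1.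
  pose proof (h3_4 A x0 x1 x2) as H2.
  congruence.
Qed.
Lemma h3_9 (A : WA) (x0 x1 : A) : (wplus A (wcompl A (wplus A (wcompl A x0) x1)) (wcompl A (wplus A (wcompl A x0) (wcompl A x1)))) = x0.
Proof.
  pose proof (ax_huntington A x0 x1) as H0.
  pose proof (h3_3 A (wcompl A (wplus A (wcompl A x0) (wcompl A x1))) (wcompl A (wplus A (wcompl A x0) x1))) as H1.
  congruence.
Qed.
Lemma h3_10 (A : WA) (x0 x1 : A) : (wplus A (wcompl A (wplus A x0 (wcompl A x1))) (wcompl A (wplus A (wcompl A x1) (wcompl A x0)))) = x1.
Proof.
  pose proof (h3_3 A (wcompl A x1) x0) as H0.
  pose proof (h3_9 A x1 x0) as H1.
  congruence.
Qed.
Lemma h3_11 (A : WA) (x0 x1 : A) : (wplus A (wcompl A (wplus A (wcompl A x0) x1)) (wcompl A (wplus A (wcompl A x1) (wcompl A x0)))) = x0.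
Proof.
  pose proof (h3_3 A (wcompl A x0) (wcompl A x1)) as H0.
  pose proof (h3_9 A x0 x1) as H1.
  congruence.
Qed.
Lemma h3_12 (A : WA) (x0 x1 : A) : (wplus A (wcompl A (wplus A x0 (wcompl A x1))) (wcompl A (wplus A (wcompl A x0) (wcompl A x1)))) = x1.
Proof.
  pose proof (h3_3 A (wcompl A x1) (wcompl A x0)) as H0.
  pose proof (h3_10 A x0 x1) as H1.
  congruence.
Qed.
Lemma h3_29 (A : WA) (x0 x1 x2 : A) : (wplus A x0 x1) = (wplus A (wcompl A (wplus A (wcompl A x0) x2)) (wplus A (wcompl A (wplus A (wcompl A x0) (wcompl A x2))) x1)).
Proof.
  pose proof (h3_9 A x0 x2) as H0.
  pose proof (h3_4 A (wcompl A (wplus A (wcompl A x0) x2)) (wcompl A (wplus A (wcompl A x0) (wcompl A x2))) x1) as H1.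
  congruence.
Qed.
Lemma h3_32 (A : WA) (x0 x1 : A) : (wplus A x0 (wcompl A (wplus A (wcompl A x0) x1))) = (wplus A x0 (wcompl A (wplus A (wcompl A (wcompl A x1)) (wcompl A x0)))).
Proof.
  pose proof (h3_11 A x0 (wcompl A x1)) as H0.
  pose proof (h3_29 A x0 (wcompl A (wplus A (wcompl A (wcompl A x1)) (wcompl A x0))) x1) as H1.
  pose proof (h3_3 A (wcompl A (wplus A (wcompl A x0) x1)) x0) as H2.
  congruence.
Qed.
Lemma h3_39 (A : WA) (x0 x1 x2 : A) : (wplus A x0 x1) = (wplus A (wcompl A (wplus A (wcompl A x1) x2)) (wplus A x0 (wcompl A (wplus A (wcompl A x1) (wcompl A x2))))).
Proof.
  pose proof (h3_9 A x1 x2) as H0.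
  pose proof (h3_6 A x0 (wcompl A (wplus A (wcompl A x1) x2)) (wcompl A (wplus A (wcompl A x1) (wcompl A x2)))) as H1.
  congruence.
Qed.
Lemma h3_138 (A : WA) (x0 x1 : A) : (wplus A x0 (wplus A (wcompl A (wplus A (wcompl A x0) x1)) (wcompl A (wplus A (wcompl A (wcompl A x1)) x0)))) = (wplus A x0 (wcompl A x1)).
Proof.
  pose proof (h3_32 A x0 x1) as H0.
  pose proof (h3_39 A x0 (wcompl A x1) x0) as H1.
  pose proof (h3_5 A (wcompl A (wplus A (wcompl A (wcompl A x1)) x0)) x0 (wcompl A (wplus A (wcompl A x0) x1))) as H2.
  pose proof (h3_5 A (wcompl A (wplus A (wcompl A x0) x1)) (wcompl A (wplus A (wcompl A (wcompl A x1)) x0)) x0) as H3.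
  congruence.
Qed.
Lemma h3_139 (A : WA) (x0 : A) : (wplus A x0 (wcompl A x0)) = (wplus A (wcompl A x0) (wcompl A (wcompl A x0))).
Proof.
  pose proof (h3_12 A (wcompl A (wcompl A x0)) x0) as H0.
  pose proof (h3_138 A (wcompl A x0) (wcompl A x0)) as H1.
  pose proof (h3_3 A (wcompl A x0) x0) as H2.
  congruence.
Qed.
Lemma h3_145 (A : WA) (x0 : A) : (wplus A (wcompl A (wplus A x0 (wcompl A x0))) (wcompl A (wplus A x0 (wcompl A (wcompl A x0))))) = (wcompl A x0).
Proof.
  pose proof (h3_139 A x0) as H0.
  pose proof (h3_11 A (wcompl A x0) x0) as H1.
  pose proof (h3_3 A (wcompl A (wplus A (wcompl A (wcompl A x0)) x0)) (wcompl A (wplus A x0 (wcompl A x0)))) as H2.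
  pose proof (h3_3 A (wcompl A (wcompl A x0)) x0) as H3.
  congruence.
Qed.
Lemma h3_146 (A : WA) (x0 : A) : (wcompl A (wcompl A x0)) = x0.
Proof.
  pose proof (h3_145 A (wcompl A x0)) as H0.
  pose proof (h3_9 A x0 (wcompl A (wcompl A x0))) as H1.
  congruence.
Qed.
Lemma nn (A : WA) (a : A) : (wcompl A (wcompl A a)) = a.
Proof.
  pose proof (h3_146 A a) as H0.
  congruence.
Qed.
Lemma one (A : WA) (a b : A) : wplus A a (wcompl A a) = wplus A b (wcompl A b).
Proof.
  pose proof (ax_huntington A a b) as Ha.
  pose proof (ax_huntington A (wcompl A a) b) as Hna.
  pose proof (ax_huntington A b a) as Hb.
  pose proof (ax_huntington A (wcompl A b) a) as Hnb.
  rewrite nn in Hna, Hnb.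
  set (w := wcompl A) in *. set (pl := wplus A) in *.
  set (p1 := w (pl (w a) (w b))) in *. set (p2 := w (pl (w a) b)) in *.
  set (p3 := w (pl a (w b))) in *. set (p4 := w (pl a b)) in *.
  assert (E1 : w (pl (w b) (w a)) = p1) by (unfold p1; f_equal; apply ax_comm).
  assert (E2 : w (pl (w b) a) = p3) by (unfold p3; f_equal; apply ax_comm).
  assert (E3 : w (pl b (w a)) = p2) by (unfold p2; f_equal; apply ax_comm).
  assert (E4 : w (pl b a) = p4) by (unfold p4; f_equal; apply ax_comm).
  rewrite E1, E2 in Hb. rewrite E3, E4 in Hnb.
  transitivity (pl (pl p1 p2) (pl p3 p4)). { rewrite Ha, Hna. reflexivity. }
  transitivity (pl (pl p1 p3) (pl p2 p4)). 2:{ rewrite Hb, Hnb. reflexivity. }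
  unfold pl. rewrite <- !ax_assoc. f_equal. rewrite !ax_assoc. f_equal. apply ax_comm.
Qed.
Lemma oneT (A : WA) (a : A) : wplus A a (wcompl A a) = wone A.
Proof. apply one. Qed.
Lemma h5_5 (A : WA) (x0 : A) : (wcompl A (wcompl A x0)) = x0.
Proof.
  pose proof (nn A x0) as H0.
  congruence.
Qed.
Lemma h5_6 (A : WA) (x0 : A) : (wplus A x0 (wcompl A x0)) = (wone A).
Proof.
  pose proof (oneT A x0) as H0.
  congruence.
Qed.
Lemma h5_7 (A : WA) (x0 : A) : (wplus A (wcompl A x0) x0) = (wone A).
Proof.
  pose proof (h5_5 A x0) as H0.
  pose proof (h5_6 A (wcompl A x0)) as H1.
  congruence.
Qed.
Lemma h5_8 (A : WA) (x0 x1 : A) : (wplus A x0 x1) = (wplus A x1 x0).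
Proof.
  pose proof (ax_comm A x0 x1) as H0.
  congruence.
Qed.
Lemma h5_9 (A : WA) (x0 x1 x2 : A) : (wplus A x0 (wplus A x1 x2)) = (wplus A (wplus A x0 x1) x2).
Proof.
  pose proof (ax_assoc A x0 x1 x2) as H0.
  congruence.
Qed.
Lemma h5_10 (A : WA) (x0 x1 : A) : (wplus A x0 (wplus A x1 (wcompl A (wplus A x0 x1)))) = (wone A).
Proof.
  pose proof (h5_9 A x0 x1 (wcompl A (wplus A x0 x1))) as H0.
  pose proof (h5_6 A (wplus A x0 x1)) as H1.
  congruence.
Qed.
Lemma h5_11 (A : WA) (x0 : A) : (wplus A x0 (wplus A (wcompl A x0) (wcompl A (wone A)))) = (wone A).
Proof.
  pose proof (h5_6 A x0) as H0.
  pose proof (h5_10 A x0 (wcompl A x0)) as H1.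
  congruence.
Qed.
Lemma h5_13 (A : WA) (x0 : A) : (wplus A x0 (wplus A (wcompl A (wone A)) (wcompl A x0))) = (wone A).
Proof.
  pose proof (h5_8 A (wcompl A x0) (wcompl A (wone A))) as H0.
  pose proof (h5_11 A x0) as H1.
  congruence.
Qed.
Lemma h5_15 (A : WA) (x0 x1 : A) : (wplus A (wone A) x0) = (wplus A x1 (wplus A (wcompl A x1) x0)).
Proof.
  pose proof (h5_6 A x1) as H0.
  pose proof (h5_9 A x1 (wcompl A x1) x0) as H1.
  congruence.
Qed.
Lemma h5_81 (A : WA) (x0 x1 : A) : (wplus A (wcompl A (wplus A (wcompl A x0) x1)) (wcompl A (wplus A (wcompl A x0) (wcompl A x1)))) = x0.
Proof.
  pose proof (ax_huntington A x0 x1) as H0.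
  pose proof (h5_8 A (wcompl A (wplus A (wcompl A x0) (wcompl A x1))) (wcompl A (wplus A (wcompl A x0) x1))) as H1.
  congruence.
Qed.
Lemma h5_82 (A : WA) (x0 : A) : (wplus A (wcompl A (wone A)) (wcompl A (wplus A (wcompl A x0) (wcompl A x0)))) = x0.
Proof.
  pose proof (h5_6 A (wcompl A x0)) as H0.
  pose proof (h5_81 A x0 (wcompl A x0)) as H1.
  pose proof (h5_8 A (wcompl A (wplus A (wcompl A x0) (wcompl A x0))) (wcompl A (wone A))) as H2.
  congruence.
Qed.
Lemma h5_83 (A : WA) (x0 : A) : (wplus A (wone A) (wcompl A x0)) = (wone A).
Proof.
  pose proof (h5_82 A x0) as H0.
  pose proof (h5_13 A (wplus A (wcompl A x0) (wcompl A x0))) as H1.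
  pose proof (h5_8 A (wplus A (wcompl A x0) (wcompl A x0)) x0) as H2.
  pose proof (h5_15 A (wcompl A x0) x0) as H3.
  congruence.
Qed.
Lemma h5_85 (A : WA) (x0 : A) : (wplus A x0 (wone A)) = (wone A).
Proof.
  pose proof (h5_83 A (wplus A x0 (wone A))) as H0.
  pose proof (h5_10 A x0 (wone A)) as H1.
  congruence.
Qed.
Lemma h5_86 (A : WA) (x0 : A) : (wplus A (wcompl A (wone A)) (wcompl A (wplus A (wcompl A x0) (wcompl A (wone A))))) = x0.
Proof.
  pose proof (h5_85 A (wcompl A x0)) as H0.
  pose proof (h5_81 A x0 (wone A)) as H1.
  congruence.
Qed.
Lemma h5_87 (A : WA) : (wplus A (wcompl A (wone A)) (wcompl A (wone A))) = (wcompl A (wone A)).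
Proof.
  pose proof (h5_7 A (wcompl A (wone A))) as H0.
  pose proof (h5_86 A (wcompl A (wone A))) as H1.
  congruence.
Qed.
Lemma h5_89 (A : WA) (x0 : A) : (wplus A (wcompl A (wone A)) (wcompl A (wplus A (wcompl A (wone A)) (wcompl A x0)))) = x0.
Proof.
  pose proof (h5_8 A (wcompl A x0) (wcompl A (wone A))) as H0.
  pose proof (h5_86 A x0) as H1.
  congruence.
Qed.
Lemma h5_95 (A : WA) (x0 : A) : (wplus A (wcompl A (wone A)) (wcompl A (wplus A x0 x0))) = (wcompl A x0).
Proof.
  pose proof (h5_7 A (wcompl A x0)) as H0.
  pose proof (h5_81 A (wcompl A x0) x0) as H1.
  pose proof (h5_8 A (wcompl A (wplus A (wcompl A (wcompl A x0)) x0)) (wcompl A (wone A))) as H2.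
  pose proof (h5_8 A (wcompl A (wcompl A x0)) x0) as H3.
  pose proof (h5_5 A x0) as H4.
  congruence.
Qed.
Lemma h5_96 (A : WA) (x0 : A) : (wplus A (wcompl A (wone A)) x0) = (wplus A x0 x0).
Proof.
  pose proof (h5_95 A x0) as H0.
  pose proof (h5_89 A (wplus A x0 x0)) as H1.
  pose proof (h5_5 A x0) as H2.
  congruence.
Qed.
Lemma h5_97 (A : WA) (x0 : A) : (wplus A x0 x0) = (wplus A x0 (wcompl A (wone A))).
Proof.
  pose proof (h5_96 A x0) as H0.
  pose proof (h5_8 A (wcompl A (wone A)) x0) as H1.
  congruence.
Qed.
Lemma h5_101 (A : WA) (x0 : A) : (wplus A (wcompl A (wone A)) x0) = (wplus A (wcompl A (wone A)) (wplus A (wcompl A (wone A)) x0)).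
Proof.
  pose proof (h5_87 A ) as H0.
  pose proof (h5_9 A (wcompl A (wone A)) (wcompl A (wone A)) x0) as H1.
  congruence.
Qed.
Lemma h5_196 (A : WA) (x0 : A) : (wplus A (wcompl A (wone A)) (wcompl A x0)) = (wcompl A x0).
Proof.
  pose proof (h5_95 A x0) as H0.
  pose proof (h5_101 A (wcompl A (wplus A x0 x0))) as H1.
  pose proof (h5_95 A x0) as H2.
  congruence.
Qed.
Lemma h5_197 (A : WA) (x0 : A) : (wcompl A (wplus A x0 x0)) = (wcompl A x0).
Proof.
  pose proof (h5_196 A (wplus A x0 x0)) as H0.
  pose proof (h5_95 A x0) as H1.
  congruence.
Qed.
Lemma h5_198 (A : WA) (x0 : A) : x0 = (wplus A x0 x0).
Proof.
  pose proof (h5_197 A x0) as H0.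
  pose proof (h5_5 A (wplus A x0 x0)) as H1.
  pose proof (h5_5 A x0) as H2.
  congruence.
Qed.
Lemma zero (A : WA) (a : A) : (wplus A a (wcompl A (wone A))) = a.
Proof.
  pose proof (h5_97 A a) as H0.
  pose proof (h5_198 A a) as H1.
  congruence.
Qed.
Lemma h6_6 (A : WA) (x0 : A) : (wcompl A (wcompl A x0)) = x0.
Proof.
  pose proof (nn A x0) as H0.
  congruence.
Qed.
Lemma h6_7 (A : WA) (x0 : A) : (wplus A x0 (wcompl A x0)) = (wone A).
Proof.
  pose proof (oneT A x0) as H0.
  congruence.
Qed.
Lemma h6_8 (A : WA) (x0 : A) : (wplus A x0 (wcompl A (wone A))) = x0.
Proof.
  pose proof (zero A x0) as H0.
  congruence.
Qed.
Lemma h6_10 (A : WA) (x0 x1 : A) : (wplus A x0 x1) = (wplus A x1 x0).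
Proof.
  pose proof (ax_comm A x0 x1) as H0.
  congruence.
Qed.
Lemma h6_58 (A : WA) (x0 x1 : A) : (wplus A (wcompl A (wplus A (wcompl A x0) x1)) (wcompl A (wplus A (wcompl A x0) (wcompl A x1)))) = x0.
Proof.
  pose proof (ax_huntington A x0 x1) as H0.
  pose proof (h6_10 A (wcompl A (wplus A (wcompl A x0) (wcompl A x1))) (wcompl A (wplus A (wcompl A x0) x1))) as H1.
  congruence.
Qed.
Lemma h6_59 (A : WA) (x0 : A) : (wcompl A (wplus A (wcompl A x0) (wcompl A x0))) = x0.
Proof.
  pose proof (h6_7 A (wcompl A x0)) as H0.
  pose proof (h6_58 A x0 (wcompl A x0)) as H1.
  pose proof (h6_8 A (wcompl A (wplus A (wcompl A x0) (wcompl A x0)))) as H2.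
  congruence.
Qed.
Lemma h6_61 (A : WA) (x0 : A) : (wcompl A (wplus A x0 x0)) = (wcompl A x0).
Proof.
  pose proof (h6_6 A x0) as H0.
  pose proof (h6_59 A (wcompl A x0)) as H1.
  pose proof (h6_6 A x0) as H2.
  congruence.
Qed.
Lemma h6_62 (A : WA) (x0 : A) : x0 = (wplus A x0 x0).
Proof.
  pose proof (h6_61 A x0) as H0.
  pose proof (h6_6 A (wplus A x0 x0)) as H1.
  pose proof (h6_6 A x0) as H2.
  congruence.
Qed.
Lemma idem (A : WA) (a : A) : (wplus A a a) = a.
Proof.
  pose proof (h6_62 A a) as H0.
  congruence.
Qed.
Lemma h7_8 (A : WA) (x0 : A) : (wplus A x0 x0) = x0.
Proof.
  pose proof (idem A x0) as H0.
  congruence.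
Qed.
Lemma h7_9 (A : WA) (x0 : A) : (wplus A x0 (wcompl A x0)) = (wone A).
Proof.
  pose proof (oneT A x0) as H0.
  congruence.
Qed.
Lemma h7_14 (A : WA) (x0 x1 x2 : A) : (wplus A x0 (wplus A x1 x2)) = (wplus A (wplus A x0 x1) x2).
Proof.
  pose proof (ax_assoc A x0 x1 x2) as H0.
  congruence.
Qed.
Lemma h7_15 (A : WA) (x0 x1 : A) : (wplus A x0 x1) = (wplus A x0 (wplus A x0 x1)).
Proof.
  pose proof (h7_8 A x0) as H0.
  pose proof (h7_14 A x0 x0 x1) as H1.
  congruence.
Qed.
Lemma h7_16 (A : WA) (x0 : A) : (wplus A x0 (wone A)) = (wone A).
Proof.
  pose proof (h7_9 A x0) as H0.
  pose proof (h7_15 A x0 (wcompl A x0)) as H1.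
  pose proof (h7_9 A x0) as H2.
  congruence.
Qed.
Lemma topT (A : WA) (a : A) : (wplus A a (wone A)) = (wone A).
Proof.
  pose proof (h7_16 A a) as H0.
  congruence.
Qed.
Lemma h8_8 (A : WA) (x0 : A) : (wcompl A (wcompl A x0)) = x0.
Proof.
  pose proof (nn A x0) as H0.
  congruence.
Qed.
Lemma h8_10 (A : WA) (x0 : A) : (wplus A x0 (wone A)) = (wone A).
Proof.
  pose proof (topT A x0) as H0.
  congruence.
Qed.
Lemma h8_11 (A : WA) (x0 : A) : (wplus A x0 (wcompl A x0)) = (wone A).
Proof.
  pose proof (oneT A x0) as H0.
  congruence.
Qed.
Lemma h8_12 (A : WA) (x0 : A) : (wplus A x0 (wcompl A (wone A))) = x0.
Proof.
  pose proof (zero A x0) as H0.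
  congruence.
Qed.
Lemma h8_14 (A : WA) (x0 x1 : A) : (wplus A x0 x1) = (wplus A x1 x0).
Proof.
  pose proof (ax_comm A x0 x1) as H0.
  congruence.
Qed.
Lemma h8_15 (A : WA) (x0 : A) : (wplus A (wone A) x0) = (wone A).
Proof.
  pose proof (h8_14 A x0 (wone A)) as H0.
  pose proof (h8_10 A x0) as H1.
  congruence.
Qed.
Lemma h8_16 (A : WA) (x0 : A) : (wplus A (wcompl A (wone A)) x0) = x0.
Proof.
  pose proof (h8_14 A x0 (wcompl A (wone A))) as H0.
  pose proof (h8_12 A x0) as H1.
  congruence.
Qed.
Lemma h8_17 (A : WA) (x0 x1 x2 : A) : (wplus A x0 (wplus A x1 x2)) = (wplus A (wplus A x0 x1) x2).
Proof.
  pose proof (ax_assoc A x0 x1 x2) as H0.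
  congruence.
Qed.
Lemma h8_21 (A : WA) (x0 x1 : A) : (wone A) = (wplus A x0 (wplus A (wcompl A x0) x1)).
Proof.
  pose proof (h8_11 A x0) as H0.
  pose proof (h8_17 A x0 (wcompl A x0) x1) as H1.
  pose proof (h8_15 A x1) as H2.
  congruence.
Qed.
Lemma h8_22 (A : WA) (x0 x1 : A) : (wplus A (wcompl A x0) (wplus A x0 x1)) = (wone A).
Proof.
  pose proof (h8_8 A x0) as H0.
  pose proof (h8_21 A (wcompl A x0) x1) as H1.
  congruence.
Qed.
Lemma h8_46 (A : WA) (x0 x1 : A) : (wplus A (wcompl A (wplus A (wcompl A x0) x1)) (wcompl A (wplus A (wcompl A x0) (wcompl A x1)))) = x0.
Proof.
  pose proof (ax_huntington A x0 x1) as H0.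
  pose proof (h8_14 A (wcompl A (wplus A (wcompl A x0) (wcompl A x1))) (wcompl A (wplus A (wcompl A x0) x1))) as H1.
  congruence.
Qed.
Lemma h8_47 (A : WA) (x0 x1 : A) : (wcompl A (wplus A (wcompl A x0) (wcompl A (wplus A x0 x1)))) = x0.
Proof.
  pose proof (h8_22 A x0 x1) as H0.
  pose proof (h8_46 A x0 (wplus A x0 x1)) as H1.
  pose proof (h8_16 A (wcompl A (wplus A (wcompl A x0) (wcompl A (wplus A x0 x1))))) as H2.
  congruence.
Qed.
Lemma h8_48 (A : WA) (x0 x1 : A) : (wcompl A x0) = (wplus A (wcompl A x0) (wcompl A (wplus A x0 x1))).
Proof.
  pose proof (h8_47 A x0 x1) as H0.
  pose proof (h8_8 A (wplus A (wcompl A x0) (wcompl A (wplus A x0 x1)))) as H1.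
  congruence.
Qed.
Lemma h8_52 (A : WA) (x0 x1 : A) : (wplus A x0 (wcompl A (wplus A (wcompl A x0) x1))) = x0.
Proof.
  pose proof (h8_8 A x0) as H0.
  pose proof (h8_48 A (wcompl A x0) x1) as H1.
  pose proof (h8_8 A x0) as H2.
  congruence.
Qed.
Lemma absorb (A : WA) (a b : A) : (wplus A (wcompl A (wplus A (wcompl A a) b)) a) = a.
Proof.
  pose proof (h8_14 A (wcompl A (wplus A (wcompl A a) b)) a) as H0.
  pose proof (h8_52 A a b) as H1.
  congruence.
Qed.
Lemma h9_9 (A : WA) (x0 : A) : (wcompl A (wcompl A x0)) = x0.
Proof.
  pose proof (nn A x0) as H0.
  congruence.
Qed.
Lemma h9_15 (A : WA) (x0 x1 : A) : (wplus A x0 x1) = (wplus A x1 x0).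
Proof.
  pose proof (ax_comm A x0 x1) as H0.
  congruence.
Qed.
Lemma h9_18 (A : WA) (x0 x1 : A) : (wplus A x0 (wcompl A (wplus A (wcompl A x0) x1))) = x0.
Proof.
  pose proof (absorb A x0 x1) as H0.
  pose proof (h9_15 A (wcompl A (wplus A (wcompl A x0) x1)) x0) as H1.
  congruence.
Qed.
Lemma h9_20 (A : WA) (x0 x1 : A) : (wplus A (wcompl A x0) (wcompl A (wplus A x0 x1))) = (wcompl A x0).
Proof.
  pose proof (h9_9 A x0) as H0.
  pose proof (h9_18 A (wcompl A x0) x1) as H1.
  congruence.
Qed.
Lemma anti (A : WA) (a b : A) : (wplus A (wcompl A (wplus A a b)) (wcompl A a)) = (wcompl A a).
Proof.
  pose proof (h9_15 A (wcompl A (wplus A a b)) (wcompl A a)) as H0.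
  pose proof (h9_20 A a b) as H1.
  congruence.
Qed.
Local Notation "x <+> y" := (wplus _ x y) (at level 50, left associativity).
Local Notation "x ^c" := (wcompl _ x) (at level 30).
Local Notation "x <;> y" := (wcomp _ x y) (at level 40, left associativity).
Local Notation "x ^v" := (wconv _ x) (at level 30).

Lemma le_refl (A : WA) (x : A) : wle _ x x.
Proof. apply idem. Qed.
Lemma le_trans (A : WA) (x y z : A) : wle _ x y -> wle _ y z -> wle _ x z.
Proof. unfold wle; intros H1 H2. rewrite <- H2, ax_assoc, H1. reflexivity. Qed.
Lemma le_antisym (A : WA) (x y : A) : wle _ x y -> wle _ y x -> x = y.
Proof. unfold wle; intros H1 H2. rewrite <- H1, <- H2 at 1. apply ax_comm. Qed.
Lemma le_plus_l (A : WA) (x y : A) : wle _ x (x <+> y).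
Proof. unfold wle. rewrite ax_assoc, idem. reflexivity. Qed.
Lemma le_plus_r (A : WA) (x y : A) : wle _ y (x <+> y).
Proof. rewrite ax_comm. apply le_plus_l. Qed.
Lemma le_lub (A : WA) (x y z : A) : wle _ x z -> wle _ y z -> wle _ (x <+> y) z.
Proof. unfold wle; intros H1 H2. rewrite <- ax_assoc, H2, H1. reflexivity. Qed.
Lemma compl_anti (A : WA) (x y : A) : wle _ x y -> wle _ (y ^c) (x ^c).
Proof. unfold wle; intros H. rewrite <- H. apply anti. Qed.
Lemma compl_anti' (A : WA) (x y : A) : wle _ (y ^c) (x ^c) -> wle _ x y.
Proof. intros H. apply compl_anti in H. rewrite !nn in H. exact H. Qed.
Lemma meet_le_l (A : WA) (x y : A) : wle _ (wmul A x y) x.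
Proof. unfold wle. unfold wmul, wzero in *. apply absorb. Qed.
Lemma meet_comm (A : WA) (x y : A) : wmul A x y = wmul A y x.
Proof. unfold wmul, wzero in *. rewrite ax_comm. reflexivity. Qed.
Lemma meet_le_r (A : WA) (x y : A) : wle _ (wmul A x y) y.
Proof. rewrite meet_comm. apply meet_le_l. Qed.
Lemma meet_glb (A : WA) (x y z : A) : wle _ z x -> wle _ z y -> wle _ z (wmul A x y).
Proof.
  intros H1 H2. apply compl_anti'. unfold wmul, wzero in *. rewrite nn.
  apply le_lub; apply compl_anti; assumption.
Qed.
Lemma meet_idem (A : WA) (x : A) : wmul A x x = x.
Proof. unfold wmul, wzero in *. rewrite idem, nn. reflexivity. Qed.
Lemma zero_le (A : WA) (x : A) : wle _ (wzero A) x.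
Proof. unfold wle. unfold wmul, wzero in *. rewrite ax_comm. apply zero. Qed.
Lemma le_zero (A : WA) (x : A) : wle _ x (wzero A) -> x = wzero A.
Proof. intros H. apply le_antisym; auto using zero_le. Qed.
Lemma hunt' (A : WA) (x y : A) : wmul A x y <+> wmul A x (y ^c) = x.
Proof. unfold wmul, wzero in *. rewrite nn. apply ax_huntington. Qed.
Lemma disj_le (A : WA) (x y : A) : wmul A x y = wzero A -> wle _ x (y ^c).
Proof.
  intros H. pose proof (hunt' A x y) as E. rewrite H in E.
  assert (E2 : wzero A <+> wmul A x (y ^c) = wmul A x (y ^c)) by apply zero_le.
  rewrite E2 in E. rewrite <- E. apply meet_le_r.
Qed.
Lemma le_disj (A : WA) (x y : A) : wle _ x (y ^c) -> wmul A x y = wzero A.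
Proof.
  intros H. apply le_zero.
  apply le_trans with (wmul A (y ^c) y).
  - apply meet_glb. eapply le_trans; [apply meet_le_l| exact H]. apply meet_le_r.
  - unfold wmul, wzero in *. rewrite nn, oneT. apply le_refl.
Qed.

Lemma conv_mono (A : WA) (x y : A) : wle _ x y -> wle _ (x ^v) (y ^v).
Proof. unfold wle; intros H. rewrite <- ax_convplus, H. reflexivity. Qed.
Lemma conv_zero (A : WA) : (wzero A) ^v = wzero A.
Proof.
  apply le_zero. pose proof (conv_mono A _ _ (zero_le A ((wzero A) ^v))) as H.
  rewrite ax_convconv in H. exact H.
Qed.
Lemma comp_distr_r (A : WA) (x y z : A) : z <;> (x <+> y) = z <;> x <+> z <;> y.
Proof.
  rewrite <- (ax_convconv A (z <;> (x <+> y))), ax_convcomp, ax_convplus, ax_distr,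
    ax_convplus, !ax_convcomp, !ax_convconv. reflexivity.
Qed.
Lemma comp_mono_l (A : WA) (x y z : A) : wle _ x y -> wle _ (x <;> z) (y <;> z).
Proof. unfold wle; intros H. rewrite <- ax_distr, H. reflexivity. Qed.
Lemma comp_mono_r (A : WA) (x y z : A) : wle _ x y -> wle _ (z <;> x) (z <;> y).
Proof. unfold wle; intros H. rewrite <- comp_distr_r, H. reflexivity. Qed.
Lemma conv_id (A : WA) : (wone' A) ^v = wone' A.
Proof.
  pose proof (ax_ident A ((wone' A) ^v)) as H.
  rewrite <- (ax_convconv A (wone' A)) at 2.
  rewrite <- H at 2. rewrite ax_convcomp, !ax_convconv. symmetry. exact H.
Qed.
Lemma ident_l (A : WA) (x : A) : wone' A <;> x = x.
Proof.
  rewrite <- (ax_convconv A (wone' A <;> x)), ax_convcomp, conv_id, ax_ident, ax_convconv.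
  reflexivity.
Qed.
Lemma cycle (A : WA) (x y z : A) :
  wmul A (x <;> y) z = wzero A -> wmul A (x ^v <;> z) y = wzero A.
Proof.
  intros H. apply le_disj. rewrite meet_comm in H. apply disj_le in H.
  eapply le_trans; [apply comp_mono_r; exact H|]. apply ax_tarski.
Qed.
Lemma meet_zero (A : WA) (x : A) : wmul A (wzero A) x = wzero A.
Proof. apply le_zero. apply meet_le_l. Qed.

Lemma atom_conv (A : WA) (a : A) : is_atom _ a -> is_atom _ (a ^v).
Proof.
  intros [Hn Ha]. split.
  - intros E. apply Hn. rewrite <- (ax_convconv A a), E. apply conv_zero.
  - intros x Hx. apply conv_mono in Hx. rewrite ax_convconv in Hx.
    destruct (Ha _ Hx) as [E|E].
    + left. rewrite <- (ax_convconv A x), E. apply conv_zero.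
    + right. rewrite <- E, ax_convconv. reflexivity.
Qed.
Lemma id_conv (A : WA) (e : A) : wle _ e (wone' A) -> wle _ (e ^v) (wone' A).
Proof. intros H. rewrite <- conv_id. apply conv_mono, H. Qed.

Lemma L_mid (A : WA) (Hat : WA_atomic A) (a : A) : is_atom _ a ->
  exists e, is_atom _ e /\ wle _ e (wone' A) /\ wle _ e (a ^v <;> a).
Proof.
  intros Ha.
  destruct (Hat (wmul A (a ^v <;> a) (wone' A))) as [e [He Hle]].
  - intros E. apply cycle in E. rewrite ax_convconv, ax_ident, meet_idem in E.
    destruct Ha as [Hn _]. exact (Hn E).
  - exists e. split; [exact He|]. split.
    + eapply le_trans; [exact Hle| apply meet_le_r].
    + eapply le_trans; [exact Hle| apply meet_le_l].
Qed.
Lemma L_right (A : WA) (Hat : WA_atomic A) (a : A) : is_atom _ a ->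
  exists e, is_atom _ e /\ wle _ e (wone' A) /\ a <;> e = a.
Proof.
  intros Ha. destruct (L_mid A Hat a Ha) as [e [He [He1 He2]]].
  exists e. split; [exact He|]. split; [exact He1|].
  assert (Hle : wle _ (a <;> e) a).
  { pose proof (comp_mono_r A _ _ a He1) as H. rewrite ax_ident in H. exact H. }
  destruct Ha as [Hn Hat'].
  destruct (Hat' _ Hle) as [E|E]; [|exact E].
  exfalso.
  assert (E2 : wmul A (a <;> e) a = wzero A) by (rewrite E; apply meet_zero).
  apply cycle in E2.
  destruct He as [Hen _]. apply Hen. apply le_zero. rewrite <- E2.
  apply meet_glb; [exact He2| apply le_refl].
Qed.
Lemma L_left (A : WA) (Hat : WA_atomic A) (a : A) : is_atom _ a ->
  exists e, is_atom _ e /\ wle _ e (wone' A) /\ e <;> a = a.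
Proof.
  intros Ha. destruct (L_right A Hat (a ^v) (atom_conv A a Ha)) as [e [He [He1 He2]]].
  exists (e ^v). split; [apply atom_conv, He|]. split; [apply id_conv, He1|].
  rewrite <- (ax_convconv A (e ^v <;> a)), ax_convcomp, ax_convconv, He2, ax_convconv.
  reflexivity.
Qed.
Lemma mkB (A : WA) (a b c : A) : is_atom _ a -> is_atom _ b -> is_atom _ c ->
  wle _ b (c <;> a) -> Bprop A (a, b, c).
Proof. intros. unfold Bprop; simpl; tauto. Qed.

Lemma exists_s (A : WA) (Hat : WA_atomic A) (t : B A) (l m : i3) : l <> m ->
  exists s : B A, Bsel s l = Bsel t l /\ wle _ (Bsel s (third l m)) (wone' A).
Proof.
  intros Hlm.
  destruct t as [[[t0 t1] t2] [H0 [H1 [H2 H3]]]]. unfold Bsel in *; simpl in *.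
  destruct l, m; try congruence; simpl.
  - destruct (L_left A Hat t0 H0) as [e [He [He1 He2]]].
    exists (exist _ (t0, t0, e) (mkB A _ _ _ H0 H0 He ltac:(rewrite He2; apply le_refl))).
    simpl. auto.
  - destruct (L_mid A Hat t0 H0) as [e [He [He1 He2]]].
    exists (exist _ (t0, e, t0 ^v) (mkB A _ _ _ H0 He (atom_conv A _ H0) He2)).
    simpl. auto.
  - destruct (L_left A Hat t1 H1) as [e [He [He1 He2]]].
    exists (exist _ (t1, t1, e) (mkB A _ _ _ H1 H1 He ltac:(rewrite He2; apply le_refl))).
    simpl. auto.
  - destruct (L_right A Hat t1 H1) as [e [He [He1 He2]]].
    exists (exist _ (e, t1, t1) (mkB A _ _ _ He H1 H1 ltac:(rewrite He2; apply le_refl))).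
    simpl. auto.
  - destruct (L_mid A Hat (t2 ^v) (atom_conv A _ H2)) as [e [He [He1 He2]]].
    rewrite ax_convconv in He2.
    exists (exist _ (t2 ^v, e, t2) (mkB A _ _ _ (atom_conv A _ H2) He H2 He2)).
    simpl. auto.
  - destruct (L_right A Hat t2 H2) as [e [He [He1 He2]]].
    exists (exist _ (e, t2, t2) (mkB A _ _ _ He H2 H2 ltac:(rewrite He2; apply le_refl))).
    simpl. auto.
Qed.

Definition i3_eqb (a b : i3) : bool :=
  match a, b with i0, i0 | i1, i1 | i2, i2 => true | _, _ => false end.
Definition rr (l m k : i3) : i3 := if i3_eqb k l then m else k.
Lemma rr_l (l m : i3) : rr l m l = m.
Proof. destruct l; reflexivity. Qed.
Lemma rr_o (l m k : i3) : k <> l -> rr l m k = k.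
Proof. intros H; destruct k, l; unfold rr; simpl; congruence. Qed.

Lemma setlast_app (A : WA) (pre : list (B A * i3)) (t : B A) (k lam : i3) :
  setlast (pre ++ [(t, k)]) lam = pre ++ [(t, lam)].
Proof.
  induction pre as [|a pre IH]; [reflexivity|].
  destruct pre as [|b pre'].
  - destruct a; reflexivity.
  - simpl app in *. rewrite <- IH. destruct a; reflexivity.
Qed.

Lemma trail_ok_last (A : WA) (pre : list (B A * i3)) (t : B A) (k k' : i3) :
  trail_ok (pre ++ [(t, k)]) -> trail_ok (pre ++ [(t, k')]).
Proof.
  induction pre as [|[a1 a2] pre IH]; [simpl; auto|].
  destruct pre as [|[b1 b2] pre']; simpl in *; tauto.
Qed.

Lemma trail_ok_snoc (A : WA) (pre : list (B A * i3)) (t s : B A) (k k2 : i3) :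
  trail_ok (pre ++ [(t, k)]) -> t <> s -> T k t s -> trail_ok (pre ++ [(t, k); (s, k2)]).
Proof.
  induction pre as [|[a1 a2] pre IH]; [simpl; tauto|].
  destruct pre as [|[b1 b2] pre']; simpl in *; tauto.
Qed.

Lemma cls_eq (A : WA) (p q : Trail A) : trail_equiv p q -> cls p = cls q.
Proof.
  intros H. unfold cls. apply functional_extensionality. intros r.
  apply propositional_extensionality. split; intros H'.
  - eapply rst_trans; [apply rst_sym; exact H| exact H'].
  - eapply rst_trans; [exact H| exact H'].
Qed.

Lemma gs_c2 (A : WA) (pre : list (B A * i3)) (t s : B A) (x l l' : i3) :
  E l l' s -> gen_step (pre ++ [(t, x); (s, l)]) (pre ++ [(t, x); (s, l')]).
Proof.
  intros HE.
  replace (pre ++ [(t, x); (s, l)]) with ((pre ++ [(t, x)]) ++ [(s, l)])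
    by (rewrite <- app_assoc; reflexivity).
  replace (pre ++ [(t, x); (s, l')]) with ((pre ++ [(t, x)]) ++ [(s, l')])
    by (rewrite <- app_assoc; reflexivity).
  apply step_c. exact HE.
Qed.

Lemma step (A : WA) (Hat : WA_atomic A) (l m : i3) (Hlm : l <> m)
  (u : i3 -> Trail A -> Prop) : V u -> V (fun k => u (rr l m k)).
Proof.
  intros [p Hp].
  destruct (proj2_sig p) as [Hne Hok].
  destruct (exists_last Hne) as [pre [[t k0] Eq]].
  destruct (exists_s A Hat t l m Hlm) as [s [Hsl Hsid]].
  assert (HE : forall x : B A, wle _ (Bsel x (third l m)) (wone' A) -> E l m x)
    by (intros; right; split; auto).
  assert (Hq : forall k, exists q : Trail A, proj1_sig q = pre ++ [(t, k)] /\ u k = cls q).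
  { intros k. destruct (Hp k) as [q [Hq1 Hq2]]. exists q. split; [|exact Hq2].
    rewrite Hq1, Eq. apply setlast_app. }
  destruct (classic (s = t)) as [Est | Nst].
  - exists p. intros k. destruct (Hp k) as [q [Hq1 Hq2]].
    exists q. split; [exact Hq1|].
    destruct (Hq l) as [ql [Hql1 Hql2]].
    destruct (Hq m) as [qm [Hqm1 Hqm2]].
    assert (Hk : setlast (proj1_sig p) k = pre ++ [(t, k)]) by (rewrite Eq; apply setlast_app).
    destruct (classic (k = l)) as [Ekl|Nkl].
    + subst k. rewrite rr_l, Hqm2. apply cls_eq.
      apply rst_sym, rst_step. rewrite Hqm1, Hq1, Hk, <- Est.
      apply step_c. apply HE. exact Hsid.
    + rewrite rr_o by exact Nkl. exact Hq2.
  - assert (Hv : forall k, (pre ++ [(t, l); (s, k)]) <> [] /\ trail_ok (pre ++ [(t, l); (s, k)])).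
    { intros k. split.
      - intros H. apply app_eq_nil in H. destruct H as [_ H]. discriminate H.
      - apply trail_ok_snoc.
        + apply trail_ok_last with k0. rewrite <- Eq. exact Hok.
        + intros H. apply Nst. symmetry. exact H.
        + unfold T. symmetry. exact Hsl. }
    set (Q := fun k => (exist _ _ (Hv k) : Trail A)).
    exists (Q l). intros k. exists (Q k). split.
    { simpl. replace (pre ++ [(t, l); (s, l)]) with ((pre ++ [(t, l)]) ++ [(s, l)])
        by (rewrite <- app_assoc; reflexivity).
      rewrite setlast_app, <- app_assoc. reflexivity. }
    destruct (classic (k = l)) as [Ekl|Nkl].
    + subst k. rewrite rr_l.
      destruct (Hq m) as [qm [Hqm1 Hqm2]]. rewrite Hqm2. apply cls_eq.
      apply rst_trans with (Q m).
      * apply rst_sym, rst_step. simpl. rewrite Hqm1. apply step_b. exact Hlm.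
      * apply rst_sym, rst_step. simpl. apply gs_c2. apply HE. exact Hsid.
    + rewrite rr_o by exact Nkl.
      destruct (Hq k) as [qk [Hqk1 Hqk2]]. rewrite Hqk2. apply cls_eq.
      apply rst_sym, rst_step. simpl. rewrite Hqk1. apply step_b.
      intros H. apply Nkl. symmetry. exact H.
Qed.
Theorem lemma8 (A : WA) (Hcomplete : WA_complete A) (Hatomic : WA_atomic A)
  (u : i3 -> (Trail A -> Prop)) :
  V u -> forall pi : i3 -> i3, ~ is_permutation pi -> V (fun k => u (pi k)).
Proof.
  intros HV pi Hnp.
  destruct (pi i0) eqn:E0, (pi i1) eqn:E1, (pi i2) eqn:E2.
  - replace (fun k => u (pi k)) with (fun k => u (rr i1 i0 (rr i2 i0 (k)))).
    2:{ apply functional_extensionality; intros []; unfold rr; simpl; congruence. }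
    apply (step A Hatomic i2 i0 ltac:(discriminate) (fun j => u (rr i1 i0 (j)))).
    apply (step A Hatomic i1 i0 ltac:(discriminate) (fun j => u (j))).
    exact HV.
  - replace (fun k => u (pi k)) with (fun k => u (rr i2 i1 (rr i1 i0 (k)))).
    2:{ apply functional_extensionality; intros []; unfold rr; simpl; congruence. }
    apply (step A Hatomic i1 i0 ltac:(discriminate) (fun j => u (rr i2 i1 (j)))).
    apply (step A Hatomic i2 i1 ltac:(discriminate) (fun j => u (j))).
    exact HV.
  - replace (fun k => u (pi k)) with (fun k => u (rr i1 i0 (k))).
    2:{ apply functional_extensionality; intros []; unfold rr; simpl; congruence. }
    apply (step A Hatomic i1 i0 ltac:(discriminate) (fun j => u (j))).
    exact HV.
  - replace (fun k => u (pi k)) with (fun k => u (rr i2 i0 (k))).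
    2:{ apply functional_extensionality; intros []; unfold rr; simpl; congruence. }
    apply (step A Hatomic i2 i0 ltac:(discriminate) (fun j => u (j))).
    exact HV.
  - replace (fun k => u (pi k)) with (fun k => u (rr i2 i1 (k))).
    2:{ apply functional_extensionality; intros []; unfold rr; simpl; congruence. }
    apply (step A Hatomic i2 i1 ltac:(discriminate) (fun j => u (j))).
    exact HV.
  - exfalso. apply Hnp. exists (fun y => match y with i0 => i0 | i1 => i1 | i2 => i2 end). split; intros []; simpl; rewrite ?E0, ?E1, ?E2; reflexivity.
  - replace (fun k => u (pi k)) with (fun k => u (rr i1 i2 (rr i2 i0 (k)))).
    2:{ apply functional_extensionality; intros []; unfold rr; simpl; congruence. }
    apply (step A Hatomic i2 i0 ltac:(discriminate) (fun j => u (rr i1 i2 (j)))).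
    apply (step A Hatomic i1 i2 ltac:(discriminate) (fun j => u (j))).
    exact HV.
  - exfalso. apply Hnp. exists (fun y => match y with i0 => i0 | i1 => i2 | i2 => i1 end). split; intros []; simpl; rewrite ?E0, ?E1, ?E2; reflexivity.
  - replace (fun k => u (pi k)) with (fun k => u (rr i1 i2 (k))).
    2:{ apply functional_extensionality; intros []; unfold rr; simpl; congruence. }
    apply (step A Hatomic i1 i2 ltac:(discriminate) (fun j => u (j))).
    exact HV.
  - replace (fun k => u (pi k)) with (fun k => u (rr i2 i0 (rr i0 i1 (rr i1 i2 (k))))).
    2:{ apply functional_extensionality; intros []; unfold rr; simpl; congruence. }
    apply (step A Hatomic i1 i2 ltac:(discriminate) (fun j => u (rr i2 i0 (rr i0 i1 (j))))).
    apply (step A Hatomic i0 i1 ltac:(discriminate) (fun j => u (rr i2 i0 (j)))).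
    apply (step A Hatomic i2 i0 ltac:(discriminate) (fun j => u (j))).
    exact HV.
  - replace (fun k => u (pi k)) with (fun k => u (rr i2 i1 (rr i1 i0 (rr i0 i2 (k))))).
    2:{ apply functional_extensionality; intros []; unfold rr; simpl; congruence. }
    apply (step A Hatomic i0 i2 ltac:(discriminate) (fun j => u (rr i2 i1 (rr i1 i0 (j))))).
    apply (step A Hatomic i1 i0 ltac:(discriminate) (fun j => u (rr i2 i1 (j)))).
    apply (step A Hatomic i2 i1 ltac:(discriminate) (fun j => u (j))).
    exact HV.
  - exfalso. apply Hnp. exists (fun y => match y with i0 => i1 | i1 => i0 | i2 => i2 end). split; intros []; simpl; rewrite ?E0, ?E1, ?E2; reflexivity.
  - replace (fun k => u (pi k)) with (fun k => u (rr i2 i0 (rr i0 i1 (k)))).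
    2:{ apply functional_extensionality; intros []; unfold rr; simpl; congruence. }
    apply (step A Hatomic i0 i1 ltac:(discriminate) (fun j => u (rr i2 i0 (j)))).
    apply (step A Hatomic i2 i0 ltac:(discriminate) (fun j => u (j))).
    exact HV.
  - replace (fun k => u (pi k)) with (fun k => u (rr i0 i1 (rr i2 i0 (k)))).
    2:{ apply functional_extensionality; intros []; unfold rr; simpl; congruence. }
    apply (step A Hatomic i2 i0 ltac:(discriminate) (fun j => u (rr i0 i1 (j)))).
    apply (step A Hatomic i0 i1 ltac:(discriminate) (fun j => u (j))).
    exact HV.
  - replace (fun k => u (pi k)) with (fun k => u (rr i0 i1 (k))).
    2:{ apply functional_extensionality; intros []; unfold rr; simpl; congruence. }
    apply (step A Hatomic i0 i1 ltac:(discriminate) (fun j => u (j))).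
    exact HV.
  - exfalso. apply Hnp. exists (fun y => match y with i0 => i2 | i1 => i0 | i2 => i1 end). split; intros []; simpl; rewrite ?E0, ?E1, ?E2; reflexivity.
  - replace (fun k => u (pi k)) with (fun k => u (rr i0 i1 (rr i1 i2 (rr i2 i0 (k))))).
    2:{ apply functional_extensionality; intros []; unfold rr; simpl; congruence. }
    apply (step A Hatomic i2 i0 ltac:(discriminate) (fun j => u (rr i0 i1 (rr i1 i2 (j))))).
    apply (step A Hatomic i1 i2 ltac:(discriminate) (fun j => u (rr i0 i1 (j)))).
    apply (step A Hatomic i0 i1 ltac:(discriminate) (fun j => u (j))).
    exact HV.
  - replace (fun k => u (pi k)) with (fun k => u (rr i0 i1 (rr i1 i2 (k)))).
    2:{ apply functional_extensionality; intros []; unfold rr; simpl; congruence. }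
    apply (step A Hatomic i1 i2 ltac:(discriminate) (fun j => u (rr i0 i1 (j)))).
    apply (step A Hatomic i0 i1 ltac:(discriminate) (fun j => u (j))).
    exact HV.
  - replace (fun k => u (pi k)) with (fun k => u (rr i1 i0 (rr i0 i2 (rr i2 i1 (k))))).
    2:{ apply functional_extensionality; intros []; unfold rr; simpl; congruence. }
    apply (step A Hatomic i2 i1 ltac:(discriminate) (fun j => u (rr i1 i0 (rr i0 i2 (j))))).
    apply (step A Hatomic i0 i2 ltac:(discriminate) (fun j => u (rr i1 i0 (j)))).
    apply (step A Hatomic i1 i0 ltac:(discriminate) (fun j => u (j))).
    exact HV.
  - exfalso. apply Hnp. exists (fun y => match y with i0 => i1 | i1 => i2 | i2 => i0 end). split; intros []; simpl; rewrite ?E0, ?E1, ?E2; reflexivity.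
  - replace (fun k => u (pi k)) with (fun k => u (rr i1 i0 (rr i0 i2 (k)))).
    2:{ apply functional_extensionality; intros []; unfold rr; simpl; congruence. }
    apply (step A Hatomic i0 i2 ltac:(discriminate) (fun j => u (rr i1 i0 (j)))).
    apply (step A Hatomic i1 i0 ltac:(discriminate) (fun j => u (j))).
    exact HV.
  - exfalso. apply Hnp. exists (fun y => match y with i0 => i2 | i1 => i1 | i2 => i0 end). split; intros []; simpl; rewrite ?E0, ?E1, ?E2; reflexivity.
  - replace (fun k => u (pi k)) with (fun k => u (rr i0 i2 (rr i2 i1 (k)))).
    2:{ apply functional_extensionality; intros []; unfold rr; simpl; congruence. }
    apply (step A Hatomic i2 i1 ltac:(discriminate) (fun j => u (rr i0 i2 (j)))).
    apply (step A Hatomic i0 i2 ltac:(discriminate) (fun j => u (j))).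
    exact HV.
  - replace (fun k => u (pi k)) with (fun k => u (rr i0 i2 (k))).
    2:{ apply functional_extensionality; intros []; unfold rr; simpl; congruence. }
    apply (step A Hatomic i0 i2 ltac:(discriminate) (fun j => u (j))).
    exact HV.
  - replace (fun k => u (pi k)) with (fun k => u (rr i1 i2 (rr i2 i0 (rr i0 i1 (k))))).
    2:{ apply functional_extensionality; intros []; unfold rr; simpl; congruence. }
    apply (step A Hatomic i0 i1 ltac:(discriminate) (fun j => u (rr i1 i2 (rr i2 i0 (j))))).
    apply (step A Hatomic i2 i0 ltac:(discriminate) (fun j => u (rr i1 i2 (j)))).
    apply (step A Hatomic i1 i2 ltac:(discriminate) (fun j => u (j))).
    exact HV.
  - replace (fun k => u (pi k)) with (fun k => u (rr i0 i2 (rr i2 i1 (rr i1 i0 (k))))).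
    2:{ apply functional_extensionality; intros []; unfold rr; simpl; congruence. }
    apply (step A Hatomic i1 i0 ltac:(discriminate) (fun j => u (rr i0 i2 (rr i2 i1 (j))))).
    apply (step A Hatomic i2 i1 ltac:(discriminate) (fun j => u (rr i0 i2 (j)))).
    apply (step A Hatomic i0 i2 ltac:(discriminate) (fun j => u (j))).
    exact HV.
  - replace (fun k => u (pi k)) with (fun k => u (rr i0 i2 (rr i1 i0 (k)))).
    2:{ apply functional_extensionality; intros []; unfold rr; simpl; congruence. }
    apply (step A Hatomic i1 i0 ltac:(discriminate) (fun j => u (rr i0 i2 (j)))).
    apply (step A Hatomic i0 i2 ltac:(discriminate) (fun j => u (j))).
    exact HV.
Qed.
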